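(* Let $G$ be a finite connected graph, fix an arbitrary orientation $\varepsilon$ of $G$ (the normal orientation) and a total order on $E(G)$. Then every Eulerian equivalence class of $\mathcal{BO}(G)$ contains exactly one reduced orientation.
   Context: An orientation assigns a direction to each edge. $\mathcal{BO}(G)$ is the set of orientations of $G$ with no nonempty directed cut, i.e. (for connected $G$) the totally cyclic orientations, in which every edge lies on a directed cycle. Two orientations $\varepsilon_1,\varepsilon_2$ are Eulerian equivalent if the spanning subgraph formed by the edges $\{e:\varepsilon_1(e)\neq\varepsilon_2(e)\}$, oriented by $\varepsilon_1$, has in-degree equal to out-degree at every vertex. Given the normal orientation $\varepsilon$ and the total order, an orientation $\varepsilon'$ is reduced if for every edge $e$, either $\varepsilon'(e)=\varepsilon(e)$, or there is no cycle that is directed with respect to $\varepsilon'$, contains $e$, and has all its other edges smaller than $e$. *)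

(* Defs.v *)
From mathcomp Require Import all_boot.
Set Implicit Arguments. Unset Strict Implicit. Unset Printing Implicit Defensive.

(* The pair (src e, tgt e) records the fixed "normal"
   orientation epsilon: epsilon directs e from src e to tgt e.
   An orientation is o : {ffun E -> bool}; o e = true means o e agrees with
   epsilon (e directed src -> tgt), o e = false means reversed. *)

Section Graph.
Variables (V E : finType) (src tgt : E -> V).

Definition otail (o : {ffun E -> bool}) (e : E) : V := if o e then src e else tgt e.
Definition ohead (o : {ffun E -> bool}) (e : E) : V := if o e then tgt e else src e.

Definition adj : rel V := fun x y =>
  [exists e, ((src e == x) && (tgt e == y)) || ((src e == y) && (tgt e == x))].

Definition connected_graph : Prop := forall x y : V, connect adj x y.

Definition directed_cut (o : {ffun E -> bool}) (S : {set V}) : bool :=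
  [exists e, (otail o e \in S) && (ohead o e \notin S)] &&
  [forall e, ~~ ((otail o e \notin S) && (ohead o e \in S))].

Definition in_BO (o : {ffun E -> bool}) : Prop := forall S : {set V}, ~~ directed_cut o S.

Definition euler_equiv (o1 o2 : {ffun E -> bool}) : Prop :=
  forall v : V,
    #|[set e | (o1 e != o2 e) && (otail o1 e == v)]| =
    #|[set e | (o1 e != o2 e) && (ohead o1 e == v)]|.

Definition directed_cycle (o : {ffun E -> bool}) (c : seq E) : bool :=
  [&& c != [::], uniq c, uniq (map (otail o) c)
    & cycle (fun e f => ohead o e == otail o f) c].

(* reduced w.r.t. the total order on E given by an injective rank : E -> nat *)
Definition reduced (rank : E -> nat) (o : {ffun E -> bool}) : Prop :=
  forall e : E, o e = true \/
    ~ (exists c : seq E, [/\ directed_cycle o c, e \in c &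
                             forall f, f \in c -> f != e -> rank f < rank e]).
End Graph.

(* Main.v *)
Require Import Defs.
From mathcomp Require Import all_boot.
From Stdlib Require Import Classical.
Set Implicit Arguments. Unset Strict Implicit. Unset Printing Implicit Defensive.

Lemma card_fib (T U : finType) (d : pred T) (g : T -> U) (S : {set U}) :
  #|[set f | d f && (g f \in S)]| = \sum_(v in S) #|[set f | d f && (g f == v)]|.
Proof.
rewrite -sum1_card (partition_big g (mem S)) /=; last by move=> f; rewrite inE => /andP[].
apply: eq_bigr => v vS; rewrite -sum1_card; apply: eq_bigl => f; rewrite !inE.
by case: eqP => [->|_]; rewrite ?vS ?andbT ?andbF.
Qed.

Definition outd (V E : finType) (src tgt : E -> V) (o : {ffun E -> bool}) v :=
  #|[set f | otail src tgt o f == v]|.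

Lemma outd_split2 (V E : finType) (src tgt : E -> V) (o1 o2 : {ffun E -> bool}) (v : V) :
  outd src tgt o2 v = #|[set f | (o1 f != o2 f) && (Defs.ohead src tgt o1 f == v)]|
     + #|[set f | (o1 f == o2 f) && (otail src tgt o1 f == v)]|.
Proof.
rewrite /outd -(cardsID [set f | o1 f != o2 f]); congr (_ + _); apply: eq_card => f;
rewrite !inE /otail /Defs.ohead; by case: (o1 f); case: (o2 f); rewrite /= ?andbT ?andbF.
Qed.

Lemma outd_split1 (V E : finType) (src tgt : E -> V) (o1 o2 : {ffun E -> bool}) (v : V) :
  outd src tgt o1 v = #|[set f | (o1 f != o2 f) && (otail src tgt o1 f == v)]|
     + #|[set f | (o1 f == o2 f) && (otail src tgt o1 f == v)]|.
Proof.
rewrite /outd -(cardsID [set f | o1 f != o2 f]); congr (_ + _); apply: eq_card => f;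
rewrite !inE /otail /Defs.ohead; by case: (o1 f); case: (o2 f); rewrite /= ?andbT ?andbF.
Qed.

Lemma ee_outd (V E : finType) (src tgt : E -> V) (o1 o2 : {ffun E -> bool}) :
  euler_equiv src tgt o1 o2 <-> forall v, outd src tgt o1 v = outd src tgt o2 v.
Proof.
split => H v.
  by rewrite (outd_split1 _ _ _ o2) (outd_split2 _ _ o1) H.
apply/eqP; rewrite -(eqn_add2r #|[set f | (o1 f == o2 f) && (otail src tgt o1 f == v)]|).
by rewrite -outd_split1 -outd_split2 H.
Qed.

Lemma eul_cut (V E : finType) (src tgt : E -> V) (o : {ffun E -> bool}) (d : pred E) (S : {set V}) :
 (forall v, #|[set f | d f && (otail src tgt o f == v)]| = #|[set f | d f && (Defs.ohead src tgt o f == v)]|) ->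
 #|[set f | d f && ((otail src tgt o f \in S) && (Defs.ohead src tgt o f \notin S))]| =
 #|[set f | d f && ((otail src tgt o f \notin S) && (Defs.ohead src tgt o f \in S))]|.
Proof.
move=> H.
have E1 : #|[set f | d f && (otail src tgt o f \in S)]| = #|[set f | d f && (Defs.ohead src tgt o f \in S)]|.
  by rewrite !card_fib; apply: eq_bigr => v _; apply: H.
move: E1; rewrite -(cardsID [set f | Defs.ohead src tgt o f \in S] [set f | d f && (otail src tgt o f \in S)]).
rewrite -(cardsID [set f | otail src tgt o f \in S] [set f | d f && (Defs.ohead src tgt o f \in S)]).
have -> : [set f | d f && (otail src tgt o f \in S)] :&: [set f | Defs.ohead src tgt o f \in S]
   = [set f | d f && (Defs.ohead src tgt o f \in S)] :&: [set f | otail src tgt o f \in S].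
  by apply/setP => f; rewrite !inE; case: (d f); case: (otail src tgt o f \in S); case: (Defs.ohead src tgt o f \in S).
move/addnI => E2.
transitivity #|[set f | d f && (otail src tgt o f \in S)] :\: [set f | Defs.ohead src tgt o f \in S]|.
  by apply: eq_card => f; rewrite !inE; case: (d f); case: (otail src tgt o f \in S); case: (Defs.ohead src tgt o f \in S).
rewrite E2; apply: eq_card => f; rewrite !inE.
by case: (d f); case: (otail src tgt o f \in S); case: (Defs.ohead src tgt o f \in S).
Qed.

Definition leave (V E : finType) (src tgt : E -> V) (o : {ffun E -> bool}) (S : {set V}) :=
  #|[set f | (otail src tgt o f \in S) && (Defs.ohead src tgt o f \notin S)]|.

Lemma leave_ee (V E : finType) (src tgt : E -> V) (o o' : {ffun E -> bool}) (S : {set V}) :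
  euler_equiv src tgt o o' -> leave src tgt o' S = leave src tgt o S.
Proof.
move=> H; rewrite /leave -(cardsID [set f | o f != o' f]) -[in RHS](cardsID [set f | o f != o' f]).
congr (_ + _); last first.
  by apply: eq_card => f; rewrite !inE /otail /Defs.ohead; case: (o f); case: (o' f); rewrite /= ?andbT ?andbF.
have := @eul_cut V E src tgt o (fun f => o f != o' f) S H => /= E3.
transitivity #|[set f | (o f != o' f) && ((otail src tgt o f \notin S) && (Defs.ohead src tgt o f \in S))]|.
  apply: eq_card => f; rewrite !inE /otail /Defs.ohead.
  by case: (o f); case: (o' f); case: (src f \in S); case: (tgt f \in S).
rewrite -E3; apply: eq_card => f; rewrite !inE.
by case: (o f != o' f); rewrite /= ?andbT ?andbF.
Qed.

Lemma dcut_leave (V E : finType) (src tgt : E -> V) (o : {ffun E -> bool}) (S : {set V}) :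
  directed_cut src tgt o S = (0 < leave src tgt o S) && (leave src tgt o (~: S) == 0).
Proof.
rewrite /directed_cut /leave; congr (_ && _).
  apply/existsP/card_gt0P => [[f Hf]|[f Hf]]; exists f; by rewrite ?inE in Hf *.
rewrite cards_eq0; apply/forallP/eqP => [H|H f].
  apply/setP => f; rewrite !inE negbK; apply/negbTE; exact: H.
apply/negP => Hf; have : f \in set0 by rewrite -H !inE negbK.
by rewrite inE.
Qed.

Lemma BO_ee (V E : finType) (src tgt : E -> V) (o o' : {ffun E -> bool}) :
  in_BO src tgt o -> euler_equiv src tgt o o' -> in_BO src tgt o'.
Proof.
move=> H ee S; rewrite dcut_leave !(leave_ee _ ee); rewrite -dcut_leave; exact: H.
Qed.

Definition rstep (V E : finType) (src tgt : E -> V) (o : {ffun E -> bool}) (d : pred E) : rel V :=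
  fun x y => [exists f, [&& d f, otail src tgt o f == x & Defs.ohead src tgt o f == y]].

Lemma build (V E : finType) (src tgt : E -> V) (o : {ffun E -> bool}) (d : pred E) (x : V) (p : seq V) :
  path (rstep src tgt o d) x p ->
  exists cs : seq E, [/\ all d cs, map (Defs.ohead src tgt o) cs = p,
     map (otail src tgt o) cs = belast x p &
     forall e0, Defs.ohead src tgt o e0 = x ->
        path (fun e f => Defs.ohead src tgt o e == otail src tgt o f) e0 cs].
Proof.
elim: p x => [|y p IH] x /=.
  by move=> _; exists [::].
case/andP => /existsP [f /and3P[df /eqP tf /eqP hf]] /IH [cs [A M T P]].
exists (f :: cs); split => /=.
- by rewrite df A.
- by rewrite hf M.
- by rewrite tf T.
- move=> e0 he0; rewrite he0 tf eqxx /=; exact: P.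
Qed.

Lemma eul_cycle (V E : finType) (src tgt : E -> V) (o : {ffun E -> bool}) (d : pred E) (e : E) :
  (forall v, #|[set f | d f && (otail src tgt o f == v)]| = #|[set f | d f && (Defs.ohead src tgt o f == v)]|) ->
  d e -> exists c, [/\ directed_cycle src tgt o c, e \in c & all d c].
Proof.
move=> H de.
set R := [set y | connect (rstep src tgt o d) (Defs.ohead src tgt o e) y].
have closed: forall f, d f -> otail src tgt o f \in R -> Defs.ohead src tgt o f \in R.
  move=> f df; rewrite !inE => Hc; apply: connect_trans Hc (connect1 _).
  by apply/existsP; exists f; rewrite df !eqxx.
have tR : otail src tgt o e \in R.
  apply/negPn/negP => tnR.
  have E1 : #|[set f | d f && (otail src tgt o f \in R)]| = #|[set f | d f && (Defs.ohead src tgt o f \in R)]|.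
    by rewrite !card_fib; apply: eq_bigr => v _; apply: H.
  have : [set f | d f && (otail src tgt o f \in R)] \proper [set f | d f && (Defs.ohead src tgt o f \in R)].
    apply/properP; split.
      apply/subsetP => f; rewrite !inE => /andP[df tf]; rewrite df /=.
      by have := closed f df; rewrite !inE; apply.
    by exists e; rewrite !inE de /= ?connect0 //; move: tnR; rewrite inE.
  by move/proper_card; rewrite E1 ltnn.
move: tR; rewrite inE => /connectP [p pp lp].
move: lp; case: (shortenP pp) => p' pp' up' _ lp.
have [cs [A M T P]] := build pp'.
exists (e :: cs); split => //=; last by rewrite de A.
  2: exact: mem_head.
have uc : uniq (otail src tgt o e :: belast (Defs.ohead src tgt o e) p').
  move: up'; rewrite lastI -lp rcons_uniq => /andP[h1 h2].
  by rewrite /= h1 h2.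
apply/and4P; split => //=.
- by move: uc; rewrite -T -(map_cons (otail src tgt o)) => /map_uniq.
- by rewrite T.
by rewrite rcons_path P //= -(last_map (Defs.ohead src tgt o)) M lp eqxx.
Qed.

Lemma card_in_seq (T : finType) (c : seq T) (P : pred T) :
  uniq c -> #|[set f | (f \in c) && P f]| = count P c.
Proof.
move=> uc; rewrite -size_filter.
have /card_uniqP <- := filter_uniq P uc.
by apply: eq_card => f; rewrite inE mem_filter andbC.
Qed.

Lemma path_map (V E : finType) (src tgt : E -> V) (o : {ffun E -> bool}) x cs :
  path (fun e f => Defs.ohead src tgt o e == otail src tgt o f) x cs ->
  map (Defs.ohead src tgt o) (belast x cs) = map (otail src tgt o) cs.
Proof.
elim: cs x => [|y cs IH] x //= /andP[/eqP -> /IH ->] //.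
Qed.

Lemma cyc_perm (V E : finType) (src tgt : E -> V) (o : {ffun E -> bool}) c :
  cycle (fun e f => Defs.ohead src tgt o e == otail src tgt o f) c ->
  perm_eq (map (Defs.ohead src tgt o) c) (map (otail src tgt o) c).
Proof.
case: c => [|x cs] // Hc; have := path_map Hc; rewrite belast_rcons => ->.
by rewrite map_rcons perm_rcons.
Qed.

Definition flip (E : finType) (o : {ffun E -> bool}) (c : seq E) : {ffun E -> bool} :=
  [ffun f => if f \in c then ~~ o f else o f].

Lemma flip_ee (V E : finType) (src tgt : E -> V) (o : {ffun E -> bool}) c :
  directed_cycle src tgt o c -> euler_equiv src tgt o (flip o c).
Proof.
case/and4P => _ uc _ cyc v.
have diff : forall f, (o f != flip o c f) = (f \in c).
  by move=> f; rewrite ffunE; case: (f \in c); case: (o f).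
rewrite (eq_card (B := [set f | (f \in c) && (otail src tgt o f == v)])); last first.
  by move=> f; rewrite !inE diff.
rewrite [in RHS](eq_card (B := [set f | (f \in c) && (Defs.ohead src tgt o f == v)])); last first.
  by move=> f; rewrite !inE diff.
rewrite !card_in_seq //.
rewrite -(count_map (otail src tgt o) (pred1 v)) -(count_map (Defs.ohead src tgt o) (pred1 v)).
by apply/esym/permP; apply: cyc_perm.
Qed.

Lemma ee_refl (V E : finType) (src tgt : E -> V) (o : {ffun E -> bool}) : euler_equiv src tgt o o.
Proof. by apply/ee_outd. Qed.

Lemma ee_trans (V E : finType) (src tgt : E -> V) (o1 o2 o3 : {ffun E -> bool}) :
  euler_equiv src tgt o1 o2 -> euler_equiv src tgt o2 o3 -> euler_equiv src tgt o1 o3.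
Proof. by move=> /ee_outd H1 /ee_outd H2; apply/ee_outd => v; rewrite H1 H2. Qed.

Lemma ee_sym (V E : finType) (src tgt : E -> V) (o1 o2 : {ffun E -> bool}) :
  euler_equiv src tgt o1 o2 -> euler_equiv src tgt o2 o1.
Proof. by move=> /ee_outd H1; apply/ee_outd => v; rewrite H1. Qed.

Lemma sum_lt (E : finType) (rank : E -> nat) (rank_inj : injective rank) (P : pred E) n :
  (forall f, P f -> rank f < n) -> \sum_(f | P f) 2 ^ rank f < 2 ^ n.
Proof.
elim: n P => [|n IH] P HP.
  by rewrite big_pred0 // => f; apply/negP => /HP.
rewrite (bigID (fun f => rank f < n)) /= expnS mul2n -addnn -addSn.
apply: leq_add; first by apply: IH => f /andP[].
case: (pickP (fun f => P f && ~~ (rank f < n))) => [f0 Hf0|H0]; last by rewrite big_pred0.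
have r0 : forall f, P f && ~~ (rank f < n) -> rank f = n.
  move=> f /andP[Pf Hf]; apply/eqP; rewrite eqn_leq -ltnS HP //= leqNgt Hf.
  by [].
rewrite (bigD1 f0) //= big1 ?addn0; first by rewrite (r0 f0 Hf0).
move=> f /andP[Hf fne].
by move: fne; rewrite (rank_inj _ _ (etrans (r0 f Hf) (esym (r0 f0 Hf0)))) eqxx.
Qed.

Definition pot (E : finType) (rank : E -> nat) (o : {ffun E -> bool}) := \sum_(f | o f) 2 ^ rank f.

Lemma pot_le (E : finType) (rank : E -> nat) (o : {ffun E -> bool}) :
  pot rank o <= \sum_f 2 ^ rank f.
Proof.
rewrite /pot big_mkcond /=; apply: leq_sum => f _; by case: (o f).
Qed.

Lemma pot_flip (E : finType) (rank : E -> nat) (rank_inj : injective rank)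
  (o : {ffun E -> bool}) c e :
  o e = false -> e \in c -> uniq c -> (forall f, f \in c -> f != e -> rank f < rank e) ->
  pot rank o < pot rank (flip o c).
Proof.
move=> oe ec uc Hc; rewrite /pot (bigID (mem c)) [X in _ < X](bigID (mem c)) /=.
have -> : \sum_(i | flip o c i && ~~ (i \in c)) 2 ^ rank i = \sum_(i | o i && ~~ (i \in c)) 2 ^ rank i.
  by apply: eq_bigl => f; rewrite ffunE; case: (f \in c); rewrite ?andbF ?andbT.
rewrite ltn_add2r.
apply: (@leq_trans (2 ^ rank e)).
  apply: sum_lt => // f /andP[ofc fc]; apply: Hc => //; apply/eqP => fe; move: ofc; by rewrite fe oe.
by rewrite (bigD1 e) /= ?leq_addr // ffunE ec oe.
Qed.

Lemma step_red (V E : finType) (src tgt : E -> V) (rank : E -> nat) (rank_inj : injective rank)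
  (o : {ffun E -> bool}) :
  ~ reduced src tgt rank o ->
  exists o', euler_equiv src tgt o o' /\ pot rank o < pot rank o'.
Proof.
move=> /not_all_ex_not [e /not_or_and [oe /NNPP [c [dc ec Hc]]]].
have oe' : o e = false by move: oe; case: (o e).
exists (flip o c); split; first exact: flip_ee.
apply: (pot_flip rank_inj oe' ec) => //.
by case/and4P: dc.
Qed.

Lemma exist_red (V E : finType) (src tgt : E -> V) (rank : E -> nat) (rank_inj : injective rank)
  (o : {ffun E -> bool}) :
  exists o', euler_equiv src tgt o o' /\ reduced src tgt rank o'.
Proof.
pose M := \sum_f 2 ^ rank f.
suff: forall k o', M - pot rank o' <= k -> euler_equiv src tgt o o' ->
    exists o'', euler_equiv src tgt o o'' /\ reduced src tgt rank o''.
  by move=> /(_ (M - pot rank o) o (leqnn _)); apply; apply: ee_refl.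
elim=> [|k IH] o' Hk Ho'; (case: (classic (reduced src tgt rank o')) => Hr; first by exists o');
  have [o'' [H1 H2]] := step_red rank_inj Hr;
  have Hlt : M - pot rank o'' < M - pot rank o' by apply: ltn_sub2l => //; apply: leq_trans H2 (pot_le _ _).
  by move: (leq_trans Hlt Hk).
apply: (IH o''); first by rewrite -ltnS; exact: leq_trans Hlt Hk.
exact: ee_trans Ho' H1.
Qed.

Lemma uniq_aux (V E : finType) (src tgt : E -> V) (rank : E -> nat) (rank_inj : injective rank)
  (o1 o2 : {ffun E -> bool}) (e : E) :
  euler_equiv src tgt o1 o2 -> reduced src tgt rank o1 -> o1 e = false -> o1 e != o2 e ->
  (forall f, o1 f != o2 f -> rank f <= rank e) -> False.
Proof.
move=> H red o1e de mx.
have [c [dc ec ac]] := @eul_cycle V E src tgt o1 (fun f => o1 f != o2 f) e H de.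
case: (red e) => [|]; first by rewrite o1e.
apply; exists c; split => // f fc fne.
have df := allP ac f fc.
rewrite ltn_neqAle mx // andbT.
by apply: contra fne => /eqP/rank_inj ->.
Qed.

Theorem lemma1 (V E : finType) (src tgt : E -> V) (rank : E -> nat)
  (rank_inj : injective rank)
  (Gconn : connected_graph src tgt) :
  forall o : {ffun E -> bool}, in_BO src tgt o ->
    exists! o' : {ffun E -> bool},
      [/\ in_BO src tgt o', euler_equiv src tgt o o' & reduced src tgt rank o'].
Proof.
move=> o Ho.
have [o1 [H1 R1]] := exist_red src tgt rank_inj o.
exists o1; split; first by split => //; exact: BO_ee Ho H1.
move=> o2 [_ H2 R2].
have H12 : euler_equiv src tgt o1 o2 := ee_trans (ee_sym H1) H2.
apply/ffunP => f0; apply/eqP; apply/negPn/negP => hne.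
case: (@arg_maxnP _ f0 (fun f => o1 f != o2 f) rank hne) => e de mx.
case Eo: (o1 e).
  have Eo2 : o2 e = false by move: de; rewrite Eo; case: (o2 e).
  apply: (uniq_aux rank_inj (ee_sym H12) R2 Eo2); first by rewrite eq_sym.
  by move=> f; rewrite eq_sym; apply: mx.
exact: (uniq_aux rank_inj H12 R1 Eo de mx).
Qed.
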